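(* Let $H$ be a real Hilbert space, $f:H\to\mathbb{R}\cup\{+\infty\}$ a proper lower semicontinuous function and $\bar x\in\operatorname{dom}f$ with $0\in\partial_pf(\bar x)$. Suppose that $\operatorname{qri}\big(N_M(\operatorname{gph}\partial_pf,(\bar x,0))\big)\ne\emptyset$ and $$\operatorname{qri}\big(\operatorname{dom}\partial^2_Mf(\bar x,0)\big)\subset-\operatorname{sqri}\big(\operatorname{dom}D^2_Mf(\bar x,0)\big).$$ Then if $f$ satisfies the second-order optimality condition of the second kind at $\bar x$, it satisfies the second-order optimality condition of the third kind at $\bar x$.
   Context: $S_H$ is the unit sphere of $H$; weak convergence is denoted $\stackrel{w}{\to}$. Proximal subdifferential: $\zeta\in\partial_p f(x)$ iff there exist $\sigma,\delta>0$ with $f(y)\ge f(x)+\langle\zeta,y-x\rangle-\frac{\sigma}{2}\|y-x\|^2$ whenever $\|y-x\|<\delta$. Mixed contingent cone: $(h,z)\in T_M(\operatorname{gph}\partial_pf,(\bar x,p))$ iff there exist $t_n\to0^+$, $h_n\to h$ in norm, $z_n\stackrel{w}{\to}z$ with $p+t_nz_n\in\partial_pf(\bar x+t_nh_n)$ for all $n$. $D^2_Mf(\bar x,p)(h):=\{z:(h,z)\in T_M(\operatorname{gph}\partial_pf,(\bar x,p))\}$. $N_M(\operatorname{gph}\partial_pf,(\bar x,p)):=\{(a,b):\langle a,h\rangle+\langle b,z\rangle\le0\ \forall(h,z)\in T_M(\operatorname{gph}\partial_pf,(\bar x,p))\}$; $\partial^2_Mf(\bar x,p)(h):=\{z:(z,-h)\in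 N_M(\operatorname{gph}\partial_pf,(\bar x,p))\}$. For a set-valued map $G$, $\operatorname{dom}G=\{h:G(h)\ne\emptyset\}$. $\operatorname{qri}A:=\{x\in A:\overline{\operatorname{cone}}(A-x)\text{ is a linear subspace}\}$, $\operatorname{sqri}A:=\{x\in A:\operatorname{cone}(A-x)\text{ is a closed linear subspace}\}$. Second kind condition at $\bar x$: $\exists\beta>0$ such that for every $h\in\operatorname{dom}D^2_Mf(\bar x,0)\cap S_H$ there is $z\in D^2_Mf(\bar x,0)(h)$ with $\langle z,h\rangle\ge\beta$. Third kind condition: $\exists\beta>0$ such that $\langle z,h\rangle\ge\beta$ for all $h\in S_H\cap\operatorname{dom}\partial^2_Mf(\bar x,0)$ and all $z\in\partial^2_Mf(\bar x,0)(h)$. *)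

(* Defs.v *)
From Stdlib Require Import Reals Lra.
Open Scope R_scope.

Record Hilbert := mkHilbert {
  hcar :> Type;
  hzero : hcar;
  hadd : hcar -> hcar -> hcar;
  hopp : hcar -> hcar;
  hscal : R -> hcar -> hcar;
  hinner : hcar -> hcar -> R;
  hadd_assoc : forall x y z, hadd x (hadd y z) = hadd (hadd x y) z;
  hadd_comm : forall x y, hadd x y = hadd y x;
  hadd_0_l : forall x, hadd hzero x = x;
  hadd_opp_r : forall x, hadd x (hopp x) = hzero;
  hscal_assoc : forall a b x, hscal a (hscal b x) = hscal (a * b) x;
  hscal_1 : forall x, hscal 1 x = x;
  hscal_distr_l : forall a x y, hscal a (hadd x y) = hadd (hscal a x) (hscal a y);
  hscal_distr_r : forall a b x, hscal (a + b) x = hadd (hscal a x) (hscal b x);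
  hinner_sym : forall x y, hinner x y = hinner y x;
  hinner_add_l : forall x y z, hinner (hadd x y) z = hinner x z + hinner y z;
  hinner_scal_l : forall a x y, hinner (hscal a x) y = a * hinner x y;
  hinner_pos : forall x, 0 <= hinner x x;
  hinner_def : forall x, hinner x x = 0 -> x = hzero;
  hcomplete : forall u : nat -> hcar,
    (forall eps, 0 < eps -> exists N, forall m n, (N <= m)%nat -> (N <= n)%nat ->
        hinner (hadd (u m) (hopp (u n))) (hadd (u m) (hopp (u n))) < eps) ->
    exists l, forall eps, 0 < eps -> exists N, forall n, (N <= n)%nat ->
        hinner (hadd (u n) (hopp l)) (hadd (u n) (hopp l)) < eps
}.

Arguments hzero {h}.
Arguments hadd {h}.
Arguments hopp {h}.
Arguments hscal {h}.
Arguments hinner {h}.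

Section HilbertDefs.
Variable H : Hilbert.

Definition hsub (x y : H) : H := hadd x (hopp y).
Definition hnorm (x : H) : R := sqrt (hinner x x).

Definition unit_sphere (h : H) : Prop := hnorm h = 1.

Definition cv_norm (u : nat -> H) (l : H) : Prop :=
  forall eps, 0 < eps -> exists N, forall n, (N <= n)%nat -> hnorm (hsub (u n) l) < eps.
Definition cv_weak (u : nat -> H) (l : H) : Prop :=
  forall w : H, Un_cv (fun n => hinner (u n) w) (hinner l w).

(** extended-real-valued functions H -> R ∪ {+∞}: None stands for +∞ *)
Definition ext_lt (r : R) (v : option R) : Prop :=
  match v with None => True | Some a => r < a end.
Definition ext_ge (v : option R) (r : R) : Prop :=
  match v with None => True | Some a => r <= a end.

Definition in_dom (f : H -> option R) (x : H) : Prop := exists a, f x = Some a.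
Definition proper (f : H -> option R) : Prop := exists x, in_dom f x.
Definition lsc (f : H -> option R) : Prop :=
  forall x r, ext_lt r (f x) ->
    exists delta, 0 < delta /\ forall y, hnorm (hsub y x) < delta -> ext_lt r (f y).

Definition prox_subdiff (f : H -> option R) (x zeta : H) : Prop :=
  exists a, f x = Some a /\
  exists sigma delta, 0 < sigma /\ 0 < delta /\
    forall y, hnorm (hsub y x) < delta ->
      ext_ge (f y) (a + hinner zeta (hsub y x)
                     - sigma / 2 * (hnorm (hsub y x)) ^ 2).

(** mixed contingent cone to gph ∂_p f at (xb, p) *)
Definition T_M (f : H -> option R) (xb p : H) (hz : H * H) : Prop :=
  exists (t : nat -> R) (hn zn : nat -> H),
    (forall n, 0 < t n) /\ Un_cv t 0 /\
    cv_norm hn (fst hz) /\ cv_weak zn (snd hz) /\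
    forall n, prox_subdiff f (hadd xb (hscal (t n) (hn n)))
                             (hadd p (hscal (t n) (zn n))).

Definition D2M (f : H -> option R) (xb p h z : H) : Prop := T_M f xb p (h, z).

Definition N_M (f : H -> option R) (xb p : H) (ab : H * H) : Prop :=
  forall hz, T_M f xb p hz ->
    hinner (fst ab) (fst hz) + hinner (snd ab) (snd hz) <= 0.

Definition d2M (f : H -> option R) (xb p h z : H) : Prop :=
  N_M f xb p (z, hopp h).

Definition sv_dom (G : H -> H -> Prop) (h : H) : Prop := exists z, G h z.

Definition cone_of (A : H -> Prop) (v : H) : Prop :=
  exists t a, 0 <= t /\ A a /\ v = hscal t a.
Definition shift (A : H -> Prop) (x : H) (v : H) : Prop :=
  exists a, A a /\ v = hsub a x.
Definition closure (A : H -> Prop) (v : H) : Prop :=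
  forall eps, 0 < eps -> exists w, A w /\ hnorm (hsub v w) < eps.
Definition is_closed (A : H -> Prop) : Prop := forall v, closure A v -> A v.
Definition lin_subspace (A : H -> Prop) : Prop :=
  A hzero /\ (forall x y, A x -> A y -> A (hadd x y)) /\
  (forall t x, A x -> A (hscal t x)).
Definition qri (A : H -> Prop) (x : H) : Prop :=
  A x /\ lin_subspace (closure (cone_of (shift A x))).
Definition sqri (A : H -> Prop) (x : H) : Prop :=
  A x /\ is_closed (cone_of (shift A x)) /\ lin_subspace (cone_of (shift A x)).

Definition padd (u v : H * H) : H * H := (hadd (fst u) (fst v), hadd (snd u) (snd v)).
Definition pscal (t : R) (u : H * H) : H * H := (hscal t (fst u), hscal t (snd u)).
Definition psub (u v : H * H) : H * H := (hsub (fst u) (fst v), hsub (snd u) (snd v)).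
Definition pzero : H * H := (hzero, hzero).
Definition cone_of2 (A : H * H -> Prop) (v : H * H) : Prop :=
  exists t a, 0 <= t /\ A a /\ v = pscal t a.
Definition shift2 (A : H * H -> Prop) (x : H * H) (v : H * H) : Prop :=
  exists a, A a /\ v = psub a x.
Definition closure2 (A : H * H -> Prop) (v : H * H) : Prop :=
  forall eps, 0 < eps -> exists w, A w /\
    hnorm (hsub (fst v) (fst w)) < eps /\ hnorm (hsub (snd v) (snd w)) < eps.
Definition lin_subspace2 (A : H * H -> Prop) : Prop :=
  A pzero /\ (forall x y, A x -> A y -> A (padd x y)) /\
  (forall t x, A x -> A (pscal t x)).
Definition qri2 (A : H * H -> Prop) (x : H * H) : Prop :=
  A x /\ lin_subspace2 (closure2 (cone_of2 (shift2 A x))).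

Definition second_kind (f : H -> option R) (xb : H) : Prop :=
  exists beta, 0 < beta /\
    forall h, sv_dom (D2M f xb hzero) h -> unit_sphere h ->
      exists z, D2M f xb hzero h z /\ beta <= hinner z h.
Definition third_kind (f : H -> option R) (xb : H) : Prop :=
  exists beta, 0 < beta /\
    forall h z, unit_sphere h -> sv_dom (d2M f xb hzero) h ->
      d2M f xb hzero h z -> beta <= hinner z h.

End HilbertDefs.

(* Main.v *)
Require Import Defs.
From Stdlib Require Import Reals Lra Psatz.
Open Scope R_scope.

Section Aux.
Variable H : Hilbert.

Lemma hadd_0_r (x : H) : hadd x hzero = x.
Proof. rewrite hadd_comm. apply hadd_0_l. Qed.

Lemma hinner_0_l (y : H) : hinner (@hzero H) y = 0.
Proof.
  assert (E := hinner_add_l H hzero hzero y). rewrite hadd_0_l in E. lra.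
Qed.

Lemma hinner_opp_l (x y : H) : hinner (hopp x) y = - hinner x y.
Proof.
  assert (E := hinner_add_l H x (hopp x) y). rewrite hadd_opp_r, hinner_0_l in E. lra.
Qed.

Lemma vec_ext (u v : H) : (forall w, hinner u w = hinner v w) -> u = v.
Proof.
  intros Hw.
  assert (Hd : hadd u (hopp v) = hzero).
  { apply hinner_def. rewrite hinner_add_l, hinner_opp_l, (Hw (hadd u (hopp v))). ring. }
  rewrite <- (hadd_0_r u), <- (hadd_opp_r H v), (hadd_comm H v), hadd_assoc, Hd.
  apply hadd_0_l.
Qed.
End Aux.

Ltac vsimpl := repeat (first [rewrite hinner_add_l | rewrite hinner_scal_l
   | rewrite hinner_opp_l | rewrite hinner_0_l]).
Ltac veq := apply vec_ext; intro; unfold hsub; vsimpl; ring.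
Ltac veqf := apply vec_ext; intro; unfold hsub; vsimpl; field.

Section Aux2.
Variable H : Hilbert.

Lemma hscal_0 (x : H) : hscal 0 x = hzero.
Proof. veq. Qed.

Lemma hinner_add_r (x y z : H) : hinner x (hadd y z) = hinner x y + hinner x z.
Proof. rewrite !(hinner_sym H x). apply hinner_add_l. Qed.
Lemma hinner_scal_r a (x y : H) : hinner x (hscal a y) = a * hinner x y.
Proof. rewrite !(hinner_sym H x). apply hinner_scal_l. Qed.
Lemma hinner_opp_r (x y : H) : hinner x (hopp y) = - hinner x y.
Proof. rewrite !(hinner_sym H x). apply hinner_opp_l. Qed.
Lemma hinner_0_r (x : H) : hinner x hzero = 0.
Proof. rewrite (hinner_sym H x). apply hinner_0_l. Qed.

Lemma hnorm_nonneg (x : H) : 0 <= hnorm H x.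
Proof. apply sqrt_pos. Qed.

Lemma hnorm_sq (x : H) : hnorm H x * hnorm H x = hinner x x.
Proof. apply sqrt_sqrt, hinner_pos. Qed.

Lemma hnorm_scal t (x : H) : hnorm H (hscal t x) = Rabs t * hnorm H x.
Proof.
  unfold hnorm. rewrite hinner_scal_l, hinner_scal_r.
  replace (t * (t * hinner x x)) with (Rsqr t * hinner x x) by (unfold Rsqr; ring).
  rewrite sqrt_mult; [| apply Rle_0_sqr | apply hinner_pos].
  rewrite sqrt_Rsqr_abs. reflexivity.
Qed.

Lemma hnorm_opp (x : H) : hnorm H (hopp x) = hnorm H x.
Proof.
  replace (hopp x) with (hscal (-1) x) by veq.
  rewrite hnorm_scal, Rabs_left by lra. ring.
Qed.

Lemma hnorm_zero : hnorm H hzero = 0.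
Proof. unfold hnorm. rewrite hinner_0_l. apply sqrt_0. Qed.

Lemma cauchy_schwarz (x y : H) : Rabs (hinner x y) <= hnorm H x * hnorm H y.
Proof.
  destruct (Req_dec (hinner y y) 0) as [E|E].
  - apply hinner_def in E. subst y. rewrite hinner_0_r, Rabs_R0.
    apply Rmult_le_pos; apply hnorm_nonneg.
  - assert (Hp : 0 < hinner y y) by (pose proof (hinner_pos H y); lra).
    set (p := hinner x y). set (t := - p / hinner y y).
    assert (Q := hinner_pos H (hadd x (hscal t y))).
    rewrite hinner_add_l, !hinner_add_r, !hinner_scal_l, !hinner_scal_r in Q.
    rewrite (hinner_sym H y x) in Q. fold p in Q.
    assert (E2 : hinner x x + t * p + (t * p + t * (t * hinner y y))
                 = (hinner x x * hinner y y - p * p) / hinner y y)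
      by (unfold t; field; lra).
    rewrite E2 in Q.
    assert (Hn : 0 <= hinner x x * hinner y y - p * p).
    { apply Rmult_le_reg_r with (/ hinner y y). apply Rinv_0_lt_compat; lra.
      rewrite Rmult_0_l. exact Q. }
    rewrite <- sqrt_Rsqr_abs. unfold hnorm. rewrite <- sqrt_mult_alt by apply hinner_pos.
    apply sqrt_le_1_alt. unfold Rsqr. lra.
Qed.

Lemma hnorm_triangle (x y : H) : hnorm H (hadd x y) <= hnorm H x + hnorm H y.
Proof.
  assert (C := cauchy_schwarz x y).
  assert (Hx := hnorm_nonneg x). assert (Hy := hnorm_nonneg y).
  assert (Sx := hnorm_sq x). assert (Sy := hnorm_sq y).
  unfold hnorm at 1.
  rewrite <- (sqrt_square (hnorm H x + hnorm H y)) by lra.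
  apply sqrt_le_1_alt.
  rewrite hinner_add_l, !hinner_add_r, (hinner_sym H y x).
  pose proof (Rle_abs (hinner x y)). nra.
Qed.

Lemma hnorm_sub_self (v : H) : hnorm H (hsub H v v) = 0.
Proof. replace (hsub H v v) with (@hzero H) by veq. apply hnorm_zero. Qed.

Lemma cl_incl (A : H -> Prop) v : A v -> closure H A v.
Proof. intros Hv eps He. exists v. split; auto. rewrite hnorm_sub_self. lra. Qed.

Lemma cl_ext (A B : H -> Prop) : (forall v, A v -> B v) ->
  forall v, closure H A v -> closure H B v.
Proof. intros AB v Hv eps He. destruct (Hv eps He) as [w [Aw Hw]]. exists w; auto. Qed.

Lemma cl_cl (A : H -> Prop) v : closure H (closure H A) v -> closure H A v.
Proof.
  intros Hv eps He.
  destruct (Hv (eps/2)) as [w1 [C1 N1]]; [lra|].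
  destruct (C1 (eps/2)) as [w2 [A2 N2]]; [lra|].
  exists w2. split; auto.
  replace (hsub H v w2) with (hadd (hsub H v w1) (hsub H w1 w2)) by veq.
  pose proof (hnorm_triangle (hsub H v w1) (hsub H w1 w2)). lra.
Qed.

Lemma cl_add (A : H -> Prop) : (forall x y, A x -> A y -> A (hadd x y)) ->
  forall u v, closure H A u -> closure H A v -> closure H A (hadd u v).
Proof.
  intros Ad u v Hu Hv eps He.
  destruct (Hu (eps/2)) as [w1 [A1 N1]]; [lra|].
  destruct (Hv (eps/2)) as [w2 [A2 N2]]; [lra|].
  exists (hadd w1 w2). split; auto.
  replace (hsub H (hadd u v) (hadd w1 w2)) with (hadd (hsub H u w1) (hsub H v w2)) by veq.
  pose proof (hnorm_triangle (hsub H u w1) (hsub H v w2)). lra.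
Qed.

Lemma cl_scal (A : H -> Prop) : (forall t x, 0 <= t -> A x -> A (hscal t x)) ->
  forall t v, 0 <= t -> closure H A v -> closure H A (hscal t v).
Proof.
  intros As t v Ht Hv eps He.
  destruct (Hv (eps/(t+1))) as [w [Aw Nw]].
  { apply Rdiv_lt_0_compat; lra. }
  exists (hscal t w). split; auto.
  replace (hsub H (hscal t v) (hscal t w)) with (hscal t (hsub H v w)) by veq.
  rewrite hnorm_scal, Rabs_pos_eq by lra.
  assert (t * hnorm H (hsub H v w) <= t * (eps / (t+1))).
  { apply Rmult_le_compat_l; lra. }
  assert (t * (eps / (t+1)) = eps - eps/(t+1)) by (field; lra).
  assert (0 < eps/(t+1)) by (apply Rdiv_lt_0_compat; lra).
  lra.
Qed.

Lemma cl_neg (A : H -> Prop) : (forall v, A v -> closure H A (hopp v)) ->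
  forall v, closure H A v -> closure H A (hopp v).
Proof.
  intros An v Hv. apply cl_cl. intros eps He.
  destruct (Hv eps He) as [w [Aw Nw]].
  exists (hopp w). split; auto.
  replace (hsub H (hopp v) (hopp w)) with (hopp (hsub H v w)) by veq.
  rewrite hnorm_opp. exact Nw.
Qed.

Lemma lin_cl (A : H -> Prop) : A hzero ->
  (forall x y, A x -> A y -> A (hadd x y)) ->
  (forall t x, 0 <= t -> A x -> A (hscal t x)) ->
  (forall v, A v -> closure H A (hopp v)) ->
  lin_subspace H (closure H A).
Proof.
  intros A0 Ad As An. split; [|split].
  - apply cl_incl, A0.
  - apply cl_add, Ad.
  - intros t x Hx. destruct (Rle_lt_dec 0 t).
    + apply cl_scal; auto.
    + replace (hscal t x) with (hscal (-t) (hopp x)) by veq.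
      apply cl_scal; [auto|lra|]. apply cl_neg; auto.
Qed.

End Aux2.

Section Main.
Variable H : Hilbert.
Variable f : H -> option R.
Variable xb : H.

Let N := N_M H f xb hzero.
Let Dset := sv_dom H (d2M H f xb hzero).
Let E := sv_dom H (D2M H f xb hzero).

Lemma N_add u v : N u -> N v -> N (padd H u v).
Proof.
  intros Hu Hv hz Hz. specialize (Hu hz Hz). specialize (Hv hz Hz).
  unfold padd; simpl. rewrite !hinner_add_l. lra.
Qed.

Lemma N_scal t u : 0 <= t -> N u -> N (pscal H t u).
Proof.
  intros Ht Hu hz Hz. specialize (Hu hz Hz).
  unfold pscal; simpl. rewrite !hinner_scal_l. nra.
Qed.

Lemma N_zero : N (hzero, hzero).
Proof. intros hz Hz. simpl. rewrite !hinner_0_l. lra. Qed.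

Lemma D_add h1 h2 : Dset h1 -> Dset h2 -> Dset (hadd h1 h2).
Proof.
  intros [z1 H1] [z2 H2]. exists (hadd z1 z2). unfold d2M in *.
  assert (P := N_add _ _ H1 H2). unfold padd in P; simpl in P.
  replace (hopp (hadd h1 h2)) with (hadd (hopp h1) (hopp h2)) by veq. exact P.
Qed.

Lemma D_scal t h : 0 <= t -> Dset h -> Dset (hscal t h).
Proof.
  intros Ht [z Hz]. exists (hscal t z). unfold d2M in *.
  assert (P := N_scal _ _ Ht Hz). unfold pscal in P; simpl in P.
  replace (hopp (hscal t h)) with (hscal t (hopp h)) by veq. exact P.
Qed.

Lemma D_zero : Dset hzero.
Proof. exists hzero. unfold d2M. replace (hopp (@hzero H)) with (@hzero H) by veq. apply N_zero. Qed.

Definition Kp (x v : H) : Prop := exists t, 0 <= t /\ Dset (hadd v (hscal t x)).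

Lemma Kp_cone x : Dset x -> forall v, Kp x v <-> cone_of H (shift H Dset x) v.
Proof.
  intros Dx v. split.
  - intros [t [Ht Dv]].
    assert (D1 : Dset (hadd (hadd v (hscal t x)) x)) by (apply D_add; auto).
    exists (t+1), (hsub H (hscal (/(t+1)) (hadd (hadd v (hscal t x)) x)) x).
    split; [lra|split].
    + exists (hscal (/(t+1)) (hadd (hadd v (hscal t x)) x)). split; auto.
      apply D_scal; auto. left. apply Rinv_0_lt_compat. lra.
    + veqf. lra.
  - intros [t [a [Ht [[d [Dd ->]] ->]]]].
    exists t. split; auto.
    replace (hadd (hscal t (hsub H d x)) (hscal t x)) with (hscal t d) by veq.
    apply D_scal; auto.
Qed.

Lemma Kp_zero x : Dset x -> Kp x hzero.
Proof. intros Dx. exists 0. split; [lra|]. replace (hadd hzero (hscal 0 x)) with (@hzero H) by veq. apply D_zero. Qed.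

Lemma Kp_add x u v : Kp x u -> Kp x v -> Kp x (hadd u v).
Proof.
  intros [t1 [H1 D1]] [t2 [H2 D2]]. exists (t1+t2). split; [lra|].
  replace (hadd (hadd u v) (hscal (t1+t2) x)) with
    (hadd (hadd u (hscal t1 x)) (hadd v (hscal t2 x))) by veq.
  apply D_add; auto.
Qed.

Lemma Kp_scal x s v : 0 <= s -> Kp x v -> Kp x (hscal s v).
Proof.
  intros Hs [t [Ht Dv]]. exists (s*t). split; [nra|].
  replace (hadd (hscal s v) (hscal (s*t) x)) with (hscal s (hadd v (hscal t x))) by veq.
  apply D_scal; auto.
Qed.

Lemma qri_hl a b h lam : qri2 H N (a, b) -> Dset h -> 0 < lam ->
  qri H Dset (hadd h (hscal lam (hopp b))).
Proof.
  intros [Nab [_ [_ Q]]] Dh Hl.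
  set (c := hopp b). set (x := hadd h (hscal lam c)).
  assert (Dc : Dset c).
  { exists a. unfold d2M, c. replace (hopp (hopp b)) with b by veq. exact Nab. }
  assert (Dx : Dset x) by (apply D_add; auto; apply D_scal; auto; lra).
  split; auto.
  assert (K1 : forall d, Dset d -> closure H (Kp c) (hopp (hsub H d c))).
  { intros d [zd Hd]. unfold d2M in Hd.
    set (u := pscal H 1 (psub H (zd, hopp d) (a, b))).
    assert (Cu : closure2 H (cone_of2 H (shift2 H N (a, b))) u).
    { intros eps He. exists u. split.
      - exists 1, (psub H (zd, hopp d) (a, b)). split; [lra|]. split; auto.
        exists (zd, hopp d). split; auto.
      - rewrite !hnorm_sub_self. lra. }
    assert (Cu' := Q (-1) u Cu).
    replace (hopp (hsub H d c)) with (hopp (snd (pscal H (-1) u))).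
    2:{ unfold u, pscal, psub, c; simpl. veq. }
    intros eps He. destruct (Cu' eps He) as [w [Cw [_ Nw]]].
    exists (hopp (snd w)). split.
    - destruct Cw as [s [a' [Hs [[n [Nn ->]] ->]]]].
      destruct n as [z' w']. exists s. split; auto.
      replace (hadd (hopp (snd (pscal H s (psub H (z', w') (a, b))))) (hscal s c))
        with (hscal s (hopp w')) by (unfold pscal, psub, c; simpl; veq).
      apply D_scal; auto. exists z'. unfold d2M.
      replace (hopp (hopp w')) with w' by veq. exact Nn.
    - replace (hsub H (hopp (snd (pscal H (-1) u))) (hopp (snd w)))
        with (hopp (hsub H (snd (pscal H (-1) u)) (snd w))) by veq.
      rewrite hnorm_opp. exact Nw. }
  assert (Kcx : forall v, Kp c v -> Kp x v).
  { intros v [t [Ht Dv]]. exists (t/lam). split.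
    - unfold Rdiv; apply Rmult_le_pos; [lra| left; apply Rinv_0_lt_compat; lra].
    - replace (hadd v (hscal (t/lam) x)) with
        (hadd (hadd v (hscal t c)) (hscal (t/lam) h)) by (unfold x; veqf; lra).
      apply D_add; auto. apply D_scal; auto. unfold Rdiv; apply Rmult_le_pos; [lra| left; apply Rinv_0_lt_compat; lra]. }
  assert (L : lin_subspace H (closure H (Kp x))).
  { apply lin_cl.
    - apply Kp_zero; auto.
    - apply Kp_add.
    - intros t y Ht Hy. apply Kp_scal; auto.
    - intros v [t [Ht Dv]].
      set (s := t + 1).
      set (d := hadd v (hscal s x)).
      assert (Dd : Dset d).
      { unfold d, s. replace (hadd v (hscal (t+1) x)) with
          (hadd (hadd v (hscal t x)) x) by veq. apply D_add; auto. }
      set (mu := s * lam).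
      assert (Hmu : 0 < mu) by (unfold mu, s; nra).
      replace (hopp v) with (hadd (hscal s h)
          (hscal mu (hopp (hsub H (hscal (/mu) d) c)))).
      2:{ unfold d, x, mu. apply vec_ext; intro; unfold hsub; vsimpl. field. unfold s; split; lra. }
      apply cl_add. apply Kp_add.
      + apply cl_incl. exists 0. split; [lra|].
        replace (hadd (hscal s h) (hscal 0 x)) with (hscal s h) by veq.
        apply D_scal; auto. unfold s; lra.
      + apply cl_scal. intros; apply Kp_scal; auto. lra.
        apply (cl_ext H (Kp c)); auto. apply K1. apply D_scal; auto.
        left. apply Rinv_0_lt_compat. lra. }
  destruct L as [L0 [La Ls]].
  assert (EQ : forall v, closure H (Kp x) v <-> closure H (cone_of H (shift H Dset x)) v).
  { intros v; split; apply cl_ext; intros w; apply (Kp_cone x Dx w). }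
  split; [|split].
  - apply EQ, L0.
  - intros y z Hy Hz. apply EQ. apply La; apply EQ; auto.
  - intros t y Hy. apply EQ. apply Ls; apply EQ; auto.
Qed.

End Main.

Section Fin.
Variable H : Hilbert.
Variable f : H -> option R.
Variable xb : H.

Lemma Un_cv_scal (u : nat -> R) l t : Un_cv u l -> Un_cv (fun n => t * u n) (t * l).
Proof.
  intros Hu. apply (CV_mult (fun _ => t) u t l); auto.
  intros eps He. exists 0%nat. intros n _. unfold R_dist. rewrite Rminus_diag, Rabs_R0. lra.
Qed.

Lemma D2M_scal p h z t : 0 < t -> D2M H f xb p h z -> D2M H f xb p (hscal t h) (hscal t z).
Proof.
  intros Ht [tn [hn [zn [Hpos [Hcv [Hh [Hz Hp]]]]]]].
  exists (fun n => / t * tn n), (fun n => hscal t (hn n)), (fun n => hscal t (zn n)).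
  split; [|split; [|split; [|split]]].
  - intros n. apply Rmult_lt_0_compat; [apply Rinv_0_lt_compat; lra| auto].
  - replace 0 with (/ t * 0) by ring. apply Un_cv_scal; auto.
  - intros eps He. simpl in *. destruct (Hh (eps / t)) as [M HM].
    { apply Rdiv_lt_0_compat; lra. }
    exists M. intros n Hn. specialize (HM n Hn).
    replace (hsub H (hscal t (hn n)) (hscal t h)) with (hscal t (hsub H (hn n) h)) by veq.
    rewrite hnorm_scal, Rabs_pos_eq by lra.
    apply Rmult_lt_compat_l with (r := t) in HM; [|lra].
    replace (t * (eps / t)) with eps in HM by (field; lra). exact HM.
  - intros w. simpl. rewrite hinner_scal_l.
    apply (Un_cv_ext (fun n => t * hinner (zn n) w)).
    + intros n. rewrite hinner_scal_l. reflexivity.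
    + apply Un_cv_scal, Hz.
  - intros n.
    replace (hadd xb (hscal (/ t * tn n) (hscal t (hn n)))) with (hadd xb (hscal (tn n) (hn n)))
      by (veqf; lra).
    replace (hadd p (hscal (/ t * tn n) (hscal t (zn n)))) with (hadd p (hscal (tn n) (zn n)))
      by (veqf; lra).
    apply Hp.
Qed.

Lemma bound_lem beta : 0 < beta ->
  (forall h, sv_dom H (D2M H f xb hzero) h -> unit_sphere H h ->
      exists z, D2M H f xb hzero h z /\ beta <= hinner z h) ->
  forall h' z', sv_dom H (D2M H f xb hzero) (hopp h') ->
   N_M H f xb hzero (z', hopp h') -> beta * hinner h' h' <= hinner z' h'.
Proof.
  intros Hb SK h' z' [z'' Hz''] HN.
  destruct (Req_dec (hinner h' h') 0) as [E0|E0].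
  - apply hinner_def in E0. subst h'. rewrite !hinner_0_r. lra.
  - assert (Hq : 0 < hinner h' h') by (pose proof (hinner_pos H h'); lra).
    set (n := hnorm H h').
    assert (Hn : 0 < n) by (unfold n, hnorm; apply sqrt_lt_R0; auto).
    assert (Sq : n * n = hinner h' h') by apply hnorm_sq.
    set (u := hscal (/n) (hopp h')).
    assert (Du : D2M H f xb hzero u (hscal (/n) z'')).
    { apply D2M_scal; auto. apply Rinv_0_lt_compat; auto. }
    assert (Uu : unit_sphere H u).
    { unfold unit_sphere, u. rewrite hnorm_scal, hnorm_opp, Rabs_pos_eq.
      fold n. field. lra. left; apply Rinv_0_lt_compat; auto. }
    destruct (SK u (ex_intro _ _ Du) Uu) as [z2 [Dz2 Bz2]].
    assert (I := HN (u, z2) Dz2). simpl in I.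
    unfold u in I, Bz2. rewrite hinner_scal_r, hinner_opp_r in I.
    rewrite hinner_scal_r, hinner_opp_r, (hinner_sym H z2 h') in Bz2.
    rewrite hinner_opp_l in I.
    set (A := hinner z' h') in *. set (B := hinner h' z2) in *.
    assert (I2 : n * (/ n * - A + - B) <= 0).
    { apply Rmult_le_reg_l with (/n). apply Rinv_0_lt_compat; auto.
      rewrite Rmult_0_r. replace (/ n * (n * (/ n * - A + - B))) with (/ n * - A + - B)
        by (field; lra). exact I. }
    replace (n * (/ n * - A + - B)) with (- A - B * n) in I2 by (field; lra).
    assert (Bz3 : beta * n <= - B).
    { apply Rmult_le_reg_l with (/n). apply Rinv_0_lt_compat; auto.
      replace (/ n * (beta * n)) with beta by (field; lra). lra. }
    rewrite <- Sq. nra.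
Qed.

Lemma lim_poly d P Q : (forall lam, 0 < lam -> lam <= 1 -> d <= lam * P + lam * lam * Q) -> d <= 0.
Proof.
  intros Hl. destruct (Rle_lt_dec d 0) as [|Hd]; auto. exfalso.
  set (M := Rabs P + Rabs Q + 1).
  assert (HM : 0 < M) by (unfold M; pose proof (Rabs_pos P); pose proof (Rabs_pos Q); lra).
  set (lam := Rmin 1 (d / (2 * M))).
  assert (H1 : 0 < lam).
  { unfold lam. apply Rmin_glb_lt; [lra|]. apply Rdiv_lt_0_compat; lra. }
  assert (H2 : lam <= 1) by apply Rmin_l.
  assert (H3 : lam <= d / (2 * M)) by apply Rmin_r.
  specialize (Hl lam H1 H2).
  assert (lam * P <= lam * Rabs P) by (apply Rmult_le_compat_l; [lra| apply Rle_abs]).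
  assert (lam * lam * Q <= lam * Rabs Q).
  { assert (lam * Q <= lam * Rabs Q) by (apply Rmult_le_compat_l; [lra| apply Rle_abs]).
    assert (0 <= lam * Rabs Q) by (apply Rmult_le_pos; [lra| apply Rabs_pos]).
    nra. }
  assert (lam * M <= d / 2).
  { apply Rmult_le_compat_r with (r := M) in H3; [|lra].
    replace (d / (2 * M) * M) with (d/2) in H3 by (field; lra). exact H3. }
  unfold M in *. lra.
Qed.

End Fin.

Theorem theorem4p2 (H : Hilbert) (f : H -> option R) (xb : H)
  (Hproper : proper H f) (Hlsc : lsc H f) (Hdom : in_dom H f xb)
  (H0 : prox_subdiff H f xb hzero)
  (Hqri : exists ab, qri2 H (N_M H f xb hzero) ab)
  (Hincl : forall h, qri H (sv_dom H (d2M H f xb hzero)) h ->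
                     sqri H (sv_dom H (D2M H f xb hzero)) (hopp h)) :
  second_kind H f xb -> third_kind H f xb.
Proof.
  intros [beta [Hb SK]]. exists beta. split; auto.
  intros h z Uh _ Hz. unfold d2M in Hz.
  destruct Hqri as [[a b] Qab].
  assert (Nab : N_M H f xb hzero (a, b)) by (destruct Qab; auto).
  assert (Dh : sv_dom H (d2M H f xb hzero) h) by (exists z; exact Hz).
  assert (Hq : hinner h h = 1).
  { unfold unit_sphere, hnorm in Uh. rewrite <- (hnorm_sq H h). unfold hnorm. rewrite Uh. ring. }
  assert (Key : forall lam, 0 < lam ->
     beta * hinner (hadd h (hscal lam (hopp b))) (hadd h (hscal lam (hopp b)))
     <= hinner (hadd z (hscal lam a)) (hadd h (hscal lam (hopp b)))).
  { intros lam Hl.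
    assert (Qh := qri_hl H f xb a b h lam Qab Dh Hl).
    destruct (Hincl _ Qh) as [Eh _].
    apply (bound_lem H f xb beta Hb SK); auto.
    assert (P := N_add H f xb _ _ Hz (N_scal H f xb lam _ (Rlt_le _ _ Hl) Nab)).
    unfold padd, pscal in P; simpl in P.
    replace (hopp (hadd h (hscal lam (hopp b)))) with (hadd (hopp h) (hscal lam b)) by veq.
    exact P. }
  assert (R0 : beta - hinner z h <= 0).
  { apply (lim_poly _
      (hinner z (hopp b) + hinner a h - beta * (hinner h (hopp b) + hinner (hopp b) h))
      (hinner a (hopp b) - beta * hinner (hopp b) (hopp b))).
    intros lam Hl _. specialize (Key lam Hl).
    rewrite !hinner_add_l, !hinner_add_r, !hinner_scal_l, !hinner_scal_r in Key.
    rewrite Hq in Key. nra. }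
  lra.
Qed.
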